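(* Let $f$, $Q$, $L$, $d_Q$ be as in the context, let $x^*\in Q$ be a minimizer of $f$ over $Q$ with $f^*=f(x^* )$, and let $T\in\mathbb{N}_0$. Run the algorithm described in the context with $\gamma_t=\frac{t+1}{2}$ for all $0\le t\le T+1$. Then \[ f(u_T)-f^*\le\frac{4L_Td_Q(x^* )}{(T+1)(T+2)}+\sum_{t=0}^{T-1}\frac{4(L_t-L_{t+1})}{(T+1)(T+2)}\Big(d_Q(z_{t+1})-\tfrac12\|z_t-\hat x_{t+1}\|^2\Big). \]
   Context: $\mathbb{R}^n$ carries the standard scalar product $\langle\cdot,\cdot\rangle$ and a (possibly different) norm $\|\cdot\|$, with dual norm $\|u\|_*=\max\{\langle u,x\rangle:\|x\|=1\}$. $Q\subseteq\mathbb{R}^n$ is closed and convex; $f:\mathbb{R}^n\to\mathbb{R}$ is convex, differentiable, attains its minimum on $Q$, and $L>0$ satisfies $\|\nabla f(x)-\nabla f(y)\|_*\le L\|x-y\|$ for all $x,y\in Q$. A distance-generating function for $Q$ is $d_Q:Q\to\mathbb{R}_{\ge0}$ that is continuous on $Q$, strongly convex with modulus 1 w.r.t. $\|\cdot\|$, and whose subdifferential admits a continuous selection $d_Q'$ on $Q^o:=\{x\in Q:\partial d_Q(x)\neq\emptyset\}$. For $z\in Q^o$, $V_z(x)=d_Q(x)-d_Q(z)-\langle d_Q'(z),x-z\rangle$ and $\mathrm{Prox}_{Q,z}(s)=\arg\min_{x\in Q}\{\langle s,x-z\rangle+V_z(x)\}$. The $d_Q$-center is $c(d_Q)=\arg\min_{x\in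 Q}d_Q(x)$, and it is assumed that $d_Q(c(d_Q))=0$. Algorithm (with weights $(\gamma_t)_{t=0}^{T+1}$, $\Gamma_t:=\sum_{k=0}^t\gamma_k$): set $L_0=L$, $x_0=c(d_Q)$, $u_0=\arg\min_{x\in Q}\{\gamma_0(f(x_0)+\langle\nabla f(x_0),x-x_0\rangle)+L_0d_Q(x)\}$, $z_0=u_0$, $\tau_0=\gamma_1/\Gamma_1$, $x_1=\tau_0z_0+(1-\tau_0)u_0$, $\hat x_1=\mathrm{Prox}_{Q,z_0}(\gamma_1\nabla f(x_1)/L_0)$, $u_1=\tau_0\hat x_1+(1-\tau_0)u_0$. For $t=1,\dots,T$: choose $0<L_t\le L$ with $f(u_t)\le f(x_t)+\langle\nabla f(x_t),u_t-x_t\rangle+\frac{L_t}{2}\|u_t-x_t\|^2$; set $z_t=\arg\min_{x\in Q}\{\sum_{k=0}^t\gamma_k(f(x_k)+\langle\nabla f(x_k),x-x_k\rangle)+L_td_Q(x)\}$; set $\tau_t=\gamma_{t+1}/\Gamma_{t+1}$ and $x_{t+1}=\tau_tz_t+(1-\tau_t)u_t$; set $\hat x_{t+1}=\mathrm{Prox}_{Q,z_t}(\gamma_{t+1}\nabla f(x_{t+1})/L_t)$; set $u_{t+1}=\tau_t\hat x_{t+1}+(1-\tau_t)u_t$. *)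

(* Defs.v *)
(* R^n is 'rV[R]_n (row vectors),
   with its canonical (product) topology from matrix_normedtype. *)
From HB Require Import structures.
From mathcomp Require Import all_boot all_order all_algebra.
From mathcomp Require Import all_classical all_reals all_analysis.
Set Implicit Arguments. Unset Strict Implicit. Unset Printing Implicit Defensive.
Import Order.TTheory GRing.Theory Num.Theory.
Import numFieldNormedType.Exports.
Local Open Scope classical_set_scope.
Local Open Scope ring_scope.

Section Defs.
Variables (R : realType) (n : nat).
Local Notation vec := 'rV[R]_n.

Definition sdot (u x : vec) : R := \sum_(i < n) u ord0 i * x ord0 i.

Definition is_norm (nrm : vec -> R) : Prop :=
  [/\ forall x, 0 <= nrm x,
      forall x, nrm x = 0 -> x = 0,
      forall (a : R) x, nrm (a *: x) = `|a| * nrm x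
    & forall x y, nrm (x + y) <= nrm x + nrm y].

Definition dual_norm (nrm : vec -> R) (u : vec) : R :=
  sup [set sdot u x | x in [set x | nrm x = 1]].

Definition convex_fun (f : vec -> R) : Prop :=
  forall x y (t : R), 0 <= t <= 1 ->
    f (t *: x + (1 - t) *: y) <= t * f x + (1 - t) * f y.

Definition strongly_convex1_on (nrm : vec -> R) (Q : set vec) (d : vec -> R) : Prop :=
  forall x y (t : R), Q x -> Q y -> 0 <= t <= 1 ->
    d (t *: x + (1 - t) *: y) <=
      t * d x + (1 - t) * d y - 2^-1 * t * (1 - t) * nrm (x - y) ^+ 2.

(* subdifferential of d : Q -> R (d seen as +oo outside Q) *)
Definition subdiff (Q : set vec) (d : vec -> R) (x : vec) : set vec :=
  [set g | forall y, Q y -> d x + sdot g (y - x) <= d y].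

Definition Qo (Q : set vec) (d : vec -> R) : set vec :=
  [set x | Q x /\ subdiff Q d x !=set0].

Definition is_dgf (nrm : vec -> R) (Q : set vec) (d : vec -> R) (d' : vec -> vec) : Prop :=
  [/\ forall x, Q x -> 0 <= d x,
      {within Q, continuous d},
      strongly_convex1_on nrm Q d,
      forall x, Qo Q d x -> subdiff Q d x (d' x)
    & {within Qo Q d, continuous d'}].

Definition is_argmin (Q : set vec) (F : vec -> R) (x : vec) : Prop :=
  Q x /\ forall y, Q y -> F x <= F y.

Definition bregman (d : vec -> R) (d' : vec -> vec) (z x : vec) : R :=
  d x - d z - sdot (d' z) (x - z).

Definition is_prox (Q : set vec) (d : vec -> R) (d' : vec -> vec) (z s p : vec) : Prop :=
  is_argmin Q (fun x => sdot s (x - z) + bregman d d' z x) p.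

End Defs.

Definition gam (R : realType) (t : nat) : R := t.+1%:R / 2.
Definition Gam (R : realType) (t : nat) : R := \sum_(k < t.+1) gam R k.
Definition tau (R : realType) (t : nat) : R := gam R t.+1 / Gam R t.+1.

(* Main.v *)
Require Import Defs.
From HB Require Import structures.
From mathcomp Require Import all_boot all_order all_algebra.
From mathcomp Require Import all_classical all_reals all_analysis.
From mathcomp Require Import ring lra.
Import Order.TTheory GRing.Theory Num.Theory.
Import numFieldNormedType.Exports.
Local Open Scope classical_set_scope.
Local Open Scope ring_scope.
Set Implicit Arguments. Unset Strict Implicit. Unset Printing Implicit Defensive.

Section Basic.
Variables (R : realType) (n : nat).
Local Notation vec := 'rV[R]_n.
Implicit Types (u v x y : vec).

Lemma sdotDr u x y : sdot u (x + y) = sdot u x + sdot u y.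
Proof. rewrite /sdot -big_split /=; apply: eq_bigr => i _; by rewrite mxE mulrDr. Qed.
Lemma sdotDl u v x : sdot (u + v) x = sdot u x + sdot v x.
Proof. rewrite /sdot -big_split /=; apply: eq_bigr => i _; by rewrite mxE mulrDl. Qed.
Lemma sdotZr a u x : sdot u (a *: x) = a * sdot u x.
Proof. rewrite /sdot mulr_sumr; apply: eq_bigr => i _; rewrite mxE; ring. Qed.
Lemma sdotZl a u x : sdot (a *: u) x = a * sdot u x.
Proof. rewrite /sdot mulr_sumr; apply: eq_bigr => i _; rewrite mxE; ring. Qed.
Lemma sdotNr u x : sdot u (- x) = - sdot u x.
Proof. by rewrite -scaleN1r sdotZr mulN1r. Qed.
Lemma sdotNl u x : sdot (- u) x = - sdot u x.
Proof. by rewrite -scaleN1r sdotZl mulN1r. Qed.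
Lemma sdotBr u x y : sdot u (x - y) = sdot u x - sdot u y.
Proof. by rewrite sdotDr sdotNr. Qed.
Lemma sdotBl u v x : sdot (u - v) x = sdot u x - sdot v x.
Proof. by rewrite sdotDl sdotNl. Qed.
Lemma sdot0r u : sdot u 0 = 0.
Proof. by rewrite /sdot big1 // => i _; rewrite mxE mulr0. Qed.
Lemma sdot0l u : sdot 0 u = 0.
Proof. by rewrite /sdot big1 // => i _; rewrite mxE mul0r. Qed.
Lemma sdot_sumr (I : finType) (F : I -> vec) x :
  sdot (\sum_i F i) x = \sum_i sdot (F i) x.
Proof.
elim/big_rec2: _ => [|i a y _ <-]; first by rewrite sdot0l.
by rewrite sdotDl.
Qed.

Lemma convQ (Q : set vec) : convex_set Q ->
  forall x y (t : R), Q x -> Q y -> 0 <= t <= 1 -> Q (t *: x + (1 - t) *: y).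
Proof.
move=> cQ x y t Qx Qy /andP[t0 t1].
have := cQ x y (Itv01 t0 t1); rewrite !inE => /(_ Qx Qy).
by [].
Qed.

Lemma lim_frac (A B : R) : (forall t : R, 0 < t <= 1 -> (1 - t) * B <= A) -> B <= A.
Proof.
move=> H; have A0 : 0 <= A by have := H 1; rewrite lexx ltr01 subrr mul0r; apply.
case: (lerP B A) => // AB; exfalso.
have B0 : 0 < B by apply: le_lt_trans AB.
pose t := (B - A) / (2 * B).
have t0 : 0 < t by rewrite /t divr_gt0 ?mulr_gt0 // subr_gt0.
have t1 : t <= 1.
  rewrite /t ler_pdivrMr ?mulr_gt0 //; lra.
have := H t; rewrite t0 t1 => /(_ isT).
have -> : (1 - t) * B = (A + B) / 2.
  rewrite /t; field; by rewrite gt_eqF.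
lra.
Qed.

End Basic.

Section SC.
Variables (R : realType) (n : nat).
Local Notation vec := 'rV[R]_n.
Variables (nrm : vec -> R) (Q : set vec) (d : vec -> R).
Hypothesis nrmP : is_norm nrm.
Hypothesis cQ : convex_set Q.
Hypothesis scd : strongly_convex1_on nrm Q d.

Lemma nrmN x : nrm (- x) = nrm x.
Proof. by case: nrmP => _ _ hZ _; rewrite -scaleN1r hZ normrN1 mul1r. Qed.
Lemma nrm_ge0 x : 0 <= nrm x.
Proof. by case: nrmP. Qed.
Lemma nrmZ a x : nrm (a *: x) = `|a| * nrm x.
Proof. by case: nrmP. Qed.
Lemma nrmB x y : nrm (x - y) = nrm (y - x).
Proof. by rewrite -nrmN opprB. Qed.

Lemma sc_sub z y g : Q z -> Q y -> subdiff Q d z g ->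
  2^-1 * nrm (y - z) ^+ 2 <= d y - d z - sdot g (y - z).
Proof.
move=> Qz Qy sg; apply: lim_frac => t /andP[t0 t1].
have t01 : 0 <= t <= 1 by rewrite ltW.
have Qp := convQ cQ Qy Qz t01.
have h1 := scd Qy Qz t01.
have h2 := sg _ Qp.
have e : t *: y + (1 - t) *: z - z = t *: (y - z).
  by apply/rowP => i; rewrite !mxE; ring.
move: h2; rewrite e sdotZr => h2.
rewrite -(@ler_pM2l _ t) //.
lra.
Qed.

Lemma argmin_sub (S : vec) (c : R) z : 0 < c -> Q z ->
  (forall p, Q p -> sdot S z + c * d z <= sdot S p + c * d p) ->
  subdiff Q d z (- (c^-1) *: S).
Proof.
move=> c0 Qz H y Qy; rewrite sdotZl sdotBr.
have := H y Qy.
have -> : d z + - c^-1 * (sdot S y - sdot S z) = c^-1 * (c * d z - sdot S y + sdot S z).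
  by field; rewrite gt_eqF.
rewrite ler_pdivrMl //; lra.
Qed.

End SC.

Section Grad.
Variables (R : realType) (n : nat).
Local Notation vec := 'rV[R]_n.
Variables (f : vec -> R) (gradf : vec -> vec).
Hypothesis cf : convex_fun f.
Hypothesis df : forall p, differentiable f p /\ forall h, 'd f p h = sdot (gradf p) h.

Lemma grad_ineq x y : f x + sdot (gradf x) (y - x) <= f y.
Proof.
have [dfx dfE] := df x.
rewrite -dfE -deriveE //.
have dvb : derivable f x (y - x) := diff_derivable dfx.
rewrite -lerBrDl.
rewrite /derive cvg_at_rightE //.
apply: limr_le.
  rewrite -(cvg_at_rightE (fun h : R => h^-1 *: ((f \o shift x) (h *: (y - x)) - f x))) //.
  apply: cvg_trans dvb; apply: cvg_app.
  move=> A [e egt0 Ae]; exists e => // t te tgt0; apply: Ae => //.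
  exact/lt0r_neq0.
near=> h.
have h0 : 0 < h by near: h; exists 1 => /=.
have h1 : h <= 1.
  near: h; exists 1 => //= t; rewrite /= distrC subr0 => /(le_lt_trans (ler_norm _)) /ltW.
  by [].
rewrite /= [h^-1 *: _]mulrC ler_pdivrMr //.
have e : h *: (y - x) + x = h *: y + (1 - h) *: x.
  by apply/rowP => i; rewrite !mxE; ring.
rewrite e.
have := cf y x (t:=h); rewrite h1 ltW // => /(_ isT).
lra.
Unshelve. all: by end_near.
Qed.

End Grad.

Section NormEq.
Variables (R : realType) (n : nat).
Local Notation vec := 'rV[R]_n.

Lemma entry_le (v : vec) i : `|v ord0 i| <= `|v|.
Proof.
rewrite [X in _ <= X]/Num.Def.normr /= mx_normrE; apply/bigmax_geP; right => /=.
by exists (ord0, i).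
Qed.

Definition l1 (a : vec) : R := \sum_i `|a ord0 i|.

Lemma l1_ge0 a : 0 <= l1 a.
Proof. by apply: sumr_ge0 => i _. Qed.

Lemma sdot_abs_le (a x : vec) : `|sdot a x| <= l1 a * `|x|.
Proof.
rewrite /sdot /l1 mulr_suml; apply: le_trans (ler_norm_sum _ _ _) _.
apply: ler_sum => i _; rewrite normrM; apply: ler_wpM2l => //; exact: entry_le.
Qed.

Lemma sdot_le (a x : vec) : sdot a x <= l1 a * `|x|.
Proof. exact: le_trans (ler_norm _) (sdot_abs_le _ _). Qed.

Variable nrm : vec -> R.
Hypothesis nrmP : is_norm nrm.

Lemma nrm0 : nrm 0 = 0.
Proof. by rewrite -(scale0r (0 : vec)) (nrmZ nrmP) normr0 mul0r. Qed.

Lemma nrm_sum (I : finType) (F : I -> vec) : nrm (\sum_i F i) <= \sum_i nrm (F i).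
Proof.
elim/big_rec2: _ => [|i a y _ Hy]; first by rewrite nrm0.
case: nrmP => _ _ _ tri; apply: le_trans (tri _ _) _; exact: lerD.
Qed.

Definition Cn : R := \sum_(i < n) nrm (delta_mx ord0 i).

Lemma nrm_upper (x : vec) : nrm x <= Cn * `|x|.
Proof.
rewrite {1}(row_sum_delta x); apply: le_trans (nrm_sum _) _.
rewrite /Cn mulr_suml; apply: ler_sum => i _.
rewrite (nrmZ nrmP) mulrC; apply: ler_wpM2l; first exact: nrm_ge0.
exact: entry_le.
Qed.

Lemma nrm_lip (x y : vec) : `|nrm x - nrm y| <= Cn * `|x - y|.
Proof.
apply: le_trans (nrm_upper _); case: nrmP => _ _ _ tri.
rewrite ler_norml; apply/andP; split.
- have := tri x (y - x); rewrite addrC subrK [nrm (y - x)](nrmB nrmP) => h. lra.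
- have := tri y (x - y); rewrite addrC subrK => h. lra.
Qed.

Lemma nrm_cont : continuous nrm.
Proof.
have C0 : 0 <= Cn by apply: sumr_ge0 => i _; exact: nrm_ge0.
move=> x; apply/(@cvgrPdist_lt _ _ _ (nbhs x) _) => e e0.
have d0 : 0 < e / (Cn + 1) by rewrite divr_gt0 // ltr_pwDr.
near=> y.
apply: le_lt_trans (nrm_lip _ _) _.
have : `|x - y| < e / (Cn + 1).
  near: y; apply/nbhs_ballP; exists (e / (Cn + 1)) => //= y.
  by rewrite -ball_normE.
rewrite ltr_pdivlMr ?ltr_pwDr // => h.
have : Cn * `|x - y| <= (Cn + 1) * `|x - y|.
  by apply: ler_wpM2r => //; lra.
lra.
Unshelve. all: by end_near.
Qed.

End NormEq.

Section NormEq2.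
Variables (R : realType) (n : nat).
Local Notation vec := 'rV[R]_n.
Variable nrm : vec -> R.
Hypothesis nrmP : is_norm nrm.

Lemma nrm_eq0 x : nrm x = 0 -> x = 0.
Proof. by case: nrmP => _ h _ _; exact: h. Qed.

Lemma normalize_entry (x : vec) i : x != 0 -> `|(`|x|^-1 *: x) ord0 i| <= 1.
Proof.
move=> x0; rewrite mxE normrM normfV normr_id.
have nx : 0 < `|x| by rewrite normr_gt0.
rewrite ler_pdivrMl // mulr1; exact: entry_le.
Qed.

Lemma normalize_norm (x : vec) : x != 0 -> `|(`|x|^-1 *: x)| = 1.
Proof.
move=> x0; rewrite normrZ normfV normr_id mulVf //.
by rewrite normr_eq0.
Qed.

Lemma nrm_lower : exists c : R, 0 < c /\ forall x : vec, c * `|x| <= nrm x.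
Proof.
pose S := [set v : vec | forall i, `[(-1:R), 1]%classic (v ord0 i)] `&` [set v : vec | 1 <= `|v|].
have Sx : forall x : vec, x != 0 -> S (`|x|^-1 *: x).
  move=> x x0; split; last by rewrite /= normalize_norm.
  move=> i /=; rewrite in_itv /= -ler_norml; exact: normalize_entry.
have [[x0 Sx0]|S0] := pselect (S !=set0); last first.
  exists 1; split => // x; have [->|xn0] := eqVneq x 0.
    by rewrite normr0 mulr0 nrm_ge0.
  by exfalso; apply: S0; exists (`|x|^-1 *: x); exact: Sx.
have cS : compact S.
  have hb : compact [set v : vec | forall i, `[(-1:R), 1]%classic (v ord0 i)].
    have h := (@rV_compact R n (fun=> `[(-1:R), 1]%classic)).
    apply: h => i; exact: segment_compact.
  apply: compact_closedI; first exact: hb.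
  have h := @preimage_closed _ _ (fun v : vec => `|v|) [set x : R | 1 <= x].
  apply: h; last exact: closed_ge.
  by move=> v _; exact: norm_continuous.
have [c Sc cmin] : exists2 c, c \in S & forall t, t \in S -> nrm c <= nrm t.
  apply: EVT_min_rV => //; first by exists x0.
  apply: continuous_subspaceT; exact: nrm_cont.
have Sc' : S c by rewrite inE in Sc.
have c0 : 0 < nrm c.
  rewrite lt_neqAle nrm_ge0 // andbT eq_sym; apply/negP => /eqP /nrm_eq0 c0.
  by case: Sc' => _ /=; rewrite c0 normr0 ler10.
exists (nrm c); split => // x; have [->|xn0] := eqVneq x 0.
  by rewrite normr0 mulr0 nrm_ge0.
have := cmin _ (mem_set (Sx _ xn0)).
rewrite (nrmZ nrmP) normfV normr_id.
have nx : 0 < `|x| by rewrite normr_gt0.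
by rewrite ler_pdivlMl // mulrC.
Qed.

Lemma dual_bound (a b : vec) : sdot a b <= dual_norm nrm a * nrm b.
Proof.
have [->|b0] := eqVneq b 0; first by rewrite sdot0r nrm0 // mulr0.
have nb : 0 < nrm b.
  rewrite lt_neqAle nrm_ge0 // andbT eq_sym; apply/negP => /eqP /nrm_eq0 h.
  by rewrite h eqxx in b0.
have [c [c0 cle]] := nrm_lower.
pose y := (nrm b)^-1 *: b.
have ny : nrm y = 1 by rewrite (nrmZ nrmP) normfV gtr0_norm // mulVf // gt_eqF.
have hs : has_sup [set sdot a x | x in [set x | nrm x = 1]].
  split; first by exists (sdot a y); exists y.
  exists (l1 a / c) => _ [x /= nx <-].
  apply: le_trans (sdot_le _ _) _.
  rewrite ler_pdivlMr // -mulrA -[X in _ <= X]mulr1 ler_wpM2l ?l1_ge0 //.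
  by have := cle x; rewrite nx mulrC.
have := sup_upper_bound hs (ex_intro2 _ _ y ny erefl).
rewrite -/(dual_norm nrm a) /y sdotZr => h.
have e : sdot a b = nrm b * ((nrm b)^-1 * sdot a b) by field; rewrite gt_eqF.
rewrite e mulrC; apply: ler_wpM2r => //; exact: ltW.
Qed.

End NormEq2.

Lemma approx_le (R : realType) (A B C : R) : 0 <= C ->
  (forall K : nat, A <= B + C / (K.+1)%:R) -> A <= B.
Proof.
move=> C0 H; apply/ler_addgt0Pr => e e0.
pose K := Num.Def.trunc (C / e).
have hK : C / e < K.+1%:R by exact: truncnS_gt.
apply: le_trans (H K) _; rewrite lerD2l.
have k0 : 0 < K.+1%:R :> R by rewrite ltr0n.
rewrite ler_pdivrMr //; move: hK; rewrite ltr_pdivrMr // => h.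
rewrite mulrC; exact: ltW.
Qed.

Section Descent.
Variables (R : realType) (n : nat).
Local Notation vec := 'rV[R]_n.
Variables (nrm : vec -> R) (Q : set vec) (f : vec -> R) (gradf : vec -> vec) (L : R).
Hypothesis nrmP : is_norm nrm.
Hypothesis cQ : convex_set Q.
Hypothesis cf : convex_fun f.
Hypothesis df : forall p, differentiable f p /\ forall h, 'd f p h = sdot (gradf p) h.
Hypothesis L0 : 0 <= L.
Hypothesis lipg : forall p q, Q p -> Q q ->
     dual_norm nrm (gradf p - gradf q) <= L * nrm (p - q).

Lemma descent x y : Q x -> Q y ->
  f y <= f x + sdot (gradf x) (y - x) + L / 2 * nrm (y - x) ^+ 2.
Proof.
move=> Qx Qy.
set h := y - x; set S := sdot (gradf x) h; set Nh := nrm h.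
have Nh0 : 0 <= Nh by exact: nrm_ge0.
apply: (@approx_le _ _ _ (L * Nh ^+ 2 / 2)).
  by apply: divr_ge0 => //; apply: mulr_ge0 => //; exact: sqr_ge0.
move=> K.
pose P : R := K.+1%:R.
have P0 : 0 < P by rewrite ltr0n.
pose del : R := P^-1.
have del0 : 0 < del by rewrite invr_gt0.
pose q (m : nat) := x + (m%:R * del) *: h.
have Qq : forall m, (m <= K.+1)%N -> Q (q m).
  move=> m mK.
  have s01 : 0 <= m%:R * del <= 1.
    apply/andP; split; first by rewrite mulr_ge0 ?ler0n ?ltW.
    have : m%:R <= P by rewrite /P ler_nat.
    move=> /(ler_wpM2r (ltW del0)); rewrite /del mulfV ?gt_eqF //.
  have := convQ cQ Qy Qx s01.
  have -> : m%:R * del *: y + (1 - m%:R * del) *: x = q m.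
    by rewrite /q /h; apply/rowP => i; rewrite !mxE; ring.
  by [].
have claim : forall m, (m <= K.+1)%N ->
  f (q m) - f x <= m%:R * del * S + L * Nh ^+ 2 * (m%:R * (m%:R + 1)) * del ^+ 2 / 2.
  elim=> [|m IH] mK.
    have -> : q 0%N = x by rewrite /q mul0r scale0r addr0.
    by rewrite subrr !mul0r mulr0 !mul0r addr0.
  have IH' := IH (ltnW mK).
  have gi := grad_ineq cf df (q m.+1) (q m).
  have e1 : q m - q m.+1 = (- del) *: h.
    by rewrite /q; apply/rowP => i; rewrite !mxE [m.+1%:R]mulrSr; ring.
  rewrite e1 sdotZr in gi.
  set G := sdot (gradf (q m.+1)) h in gi.
  have e2 : G - S = sdot (gradf (q m.+1) - gradf x) h by rewrite sdotBl.
  have hb := dual_bound nrmP (gradf (q m.+1) - gradf x) h.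
  have hl := lipg (Qq _ mK) Qx.
  have e3 : nrm (q m.+1 - x) = (m.+1%:R * del) * Nh.
    rewrite /q addrC addKr (nrmZ nrmP) ger0_norm // mulr_ge0 ?ler0n ?ltW //.
  rewrite e3 -e2 in hl hb.
  have hG : G - S <= L * (m.+1%:R * del * Nh) * Nh.
    apply: le_trans hb _; apply: ler_wpM2r => //.
  have hG2 : del * (G - S) <= del * (L * (m.+1%:R * del * Nh) * Nh).
    by apply: ler_wpM2l => //; exact: ltW.
  rewrite [m.+1%:R]mulrSr in hG2 *.
  lra.
have := claim _ (leqnn K.+1).
have qK : q K.+1 = y.
  rewrite /q /del -/P mulfV ?gt_eqF // scale1r /h.
  by apply/rowP => i; rewrite !mxE; ring.
rewrite qK -/P /del.
have -> : P * P^-1 = 1 by rewrite mulfV // gt_eqF.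
move=> hc.
have e4 : L * Nh ^+ 2 * (P * (P + 1)) * P^-1 ^+ 2 / 2 = L / 2 * Nh ^+ 2 + L * Nh ^+ 2 / 2 / P.
  by field; rewrite gt_eqF.
rewrite /h in e4 hc *. rewrite e4 in hc. rewrite -/Nh in hc *.
rewrite mul1r in hc. by move: hc; rewrite lerBlDl !addrA.
Qed.

End Descent.


Section Quad.
Variables (R : realType) (n : nat).
Local Notation vec := 'rV[R]_n.

Definition sq (p x : vec) : R := sdot (x - p) (x - p).

Lemma sq_cont p : continuous (sq p).
Proof.
have -> : sq p = fun x => \sum_(i < n) (x ord0 i - p ord0 i) * (x ord0 i - p ord0 i).
  apply/funext => x; rewrite /sq /sdot; apply: eq_bigr => i _; by rewrite !mxE.
apply: continuous_big; first exact: add_continuous.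
move=> i _ x.
have hc : {for x, continuous (fun y : vec => y ord0 i - p ord0 i)}.
  apply: (@cvgB _ _ _ _ _ (fun y : vec => y ord0 i) (fun=> p ord0 i)).
  - exact: nbhs_filter.
  - exact: (@coord_continuous R 1 n ord0 i x).
  - apply: cvg_cst.
    exact: nbhs_filter.
exact: (@cvgM _ _ _ _ (fun y : vec => y ord0 i - p ord0 i) (fun y : vec => y ord0 i - p ord0 i) _ _ hc hc).
Qed.
End Quad.

Section Cont.
Variables (R : realType) (n : nat).
Local Notation vec := 'rV[R]_n.

Lemma cont_eps (A : set vec) (g : vec -> vec) x : {within A, continuous g} -> A x ->
  forall e : R, 0 < e -> exists2 del : R, 0 < del &
    forall w, A w -> `|x - w| < del -> `|g x - g w| < e.
Proof.
move=> /subspace_continuousP /(_ x) H Ax e e0.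
have := H Ax; move/(@cvgrPdist_lt _ _ _ _ (within_filter _ (nbhs_filter x))) => /(_ e e0).
rewrite /within /= => /nbhs_ballP [del del0 hb].
exists del => // w Aw xw; apply: (hb w) => //.
by rewrite -ball_normE.
Qed.

Lemma sdotC (u v : vec) : sdot u v = sdot v u.
Proof. by rewrite /sdot; apply: eq_bigr => i _; rewrite mulrC. Qed.

Lemma sdot_abs_le' (a x : vec) : `|sdot a x| <= `|a| * l1 x.
Proof. by rewrite sdotC mulrC; exact: sdot_abs_le. Qed.

Lemma l1_le (x : vec) : l1 x <= n%:R * `|x|.
Proof.
rewrite /l1; apply: le_trans (_ : \sum_(i < n) `|x| <= _).
  by apply: ler_sum => i _; exact: entry_le.
by rewrite sumr_const card_ord mulr_natl.
Qed.

Lemma norm_sq_le (r : vec) : `|r| ^+ 2 <= sdot r r.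
Proof.
have [->|r0] := eqVneq `|r| 0.
  rewrite expr0n /= /sdot; apply: sumr_ge0 => i _; rewrite -expr2; exact: sqr_ge0.
have [[i j] /= e] := mx_norm_neq0 r0.
have e' : `|r| = `|r i j| := e.
rewrite e'; clear e e'.
have -> : i = ord0 by apply/val_inj; case: i => -[].
rewrite /sdot (bigD1 j) //= real_normK ?num_real // expr2 lerDl.
by apply: sumr_ge0 => k _; rewrite -expr2; exact: sqr_ge0.
Qed.

Lemma coord_sq_le (r : vec) i : r ord0 i ^+ 2 <= sdot r r.
Proof.
rewrite /sdot (bigD1 i) //= expr2 lerDl.
by apply: sumr_ge0 => k _; rewrite -expr2; exact: sqr_ge0.
Qed.

Lemma quad_exp (a b : vec) (t : R) :
  sdot (a + t *: b) (a + t *: b) = sdot a a + 2 * t * sdot a b + t ^+ 2 * sdot b b.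
Proof.
rewrite /sdot !mulr_sumr -!big_split; apply: eq_bigr => i _; rewrite !mxE; rewrite /=; ring.
Qed.

Lemma sq_expand (p w y : vec) (t : R) :
  sq p (t *: y + (1 - t) *: w) = sq p w + 2 * t * sdot (w - p) (y - w) + t ^+ 2 * sq w y.
Proof.
rewrite /sq.
have -> : t *: y + (1 - t) *: w - p = (w - p) + t *: (y - w).
  by apply/rowP => i; rewrite !mxE; ring.
by rewrite quad_exp.
Qed.

End Cont.

Section Key.
Variables (R : realType) (n : nat).
Local Notation vec := 'rV[R]_n.
Variables (nrm : vec -> R) (Q : set vec) (d : vec -> R) (d' : vec -> vec).
Hypothesis nrmP : is_norm nrm.
Hypothesis clQ : closed Q.
Hypothesis cQ : convex_set Q.
Hypothesis dgf : is_dgf nrm Q d d'.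

Lemma d_ge0 x : Q x -> 0 <= d x.
Proof. by case: dgf => h _ _ _ _; exact: h. Qed.

Lemma d_conv x y t : Q x -> Q y -> 0 <= t <= 1 ->
  d (t *: x + (1 - t) *: y) <= t * d x + (1 - t) * d y.
Proof.
move=> Qx Qy t01; case: dgf => _ _ sc _ _.
apply: le_trans (sc _ _ _ Qx Qy t01) _.
rewrite lerBlDr lerDl; case/andP: t01 => t0 t1.
apply: mulr_ge0; last exact: sqr_ge0.
by apply: mulr_ge0; [apply: mulr_ge0 => //; rewrite invr_ge0 | rewrite subr_ge0].
Qed.

Lemma penalty_Qo (p : vec) (M : R) w : 0 < M -> Q w ->
  (forall x, Q x -> d w + M * sq p w <= d x + M * sq p x) -> Qo Q d w.
Proof.
move=> M0 Qw H; split => //.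
exists ((- (2 * M)) *: (w - p)) => y Qy.
rewrite sdotZl.
suff : 0 <= d y - d w + 2 * M * sdot (w - p) (y - w) by lra.
set A := d y - d w + 2 * M * sdot (w - p) (y - w).
have : M * sq w y <= A + M * sq w y.
  apply: lim_frac => t /andP[t0 t1].
  have t01 : 0 <= t <= 1 by rewrite ltW.
  have Qyt := convQ cQ Qy Qw t01.
  have h1 := H _ Qyt.
  have h2 := d_conv Qy Qw t01.
  rewrite sq_expand in h1.
  rewrite -(@ler_pM2l _ t) // /A.
  have h3 : 0 <= M * t ^+ 2 * sq w y.
    apply: mulr_ge0; first by apply: mulr_ge0; [exact: ltW| exact: sqr_ge0].
    rewrite /sq; apply: le_trans (norm_sq_le _); exact: sqr_ge0.
  nra.
lra.
Qed.

Lemma exists_penalty (p : vec) (M : R) : 0 < M -> Q p ->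
  exists w, [/\ Q w, Qo Q d w & M * sq p w <= d p].
Proof.
move=> M0 Qp.
have dp0 := d_ge0 Qp.
pose rho := d p / M + 1.
have rho1 : 1 <= rho by rewrite /rho lerDr divr_ge0 // ltW.
pose box := [set v : vec | forall i, `[p ord0 i - rho, p ord0 i + rho]%classic (v ord0 i)].
pose K := box `&` Q.
have cK : compact K.
  apply: compact_closedI => //.
  have h := (@rV_compact R n (fun i => `[p ord0 i - rho, p ord0 i + rho]%classic)).
  apply: h => i; exact: segment_compact.
have Kp : K p.
  split => // i /=; rewrite in_itv /=; apply/andP; split; lra.
pose G := fun x : vec => d x + M * sq p x.
have Gc : {within K, continuous G}.
  have dc : {within K, continuous d}.
    by case: dgf => _ hc _ _ _; apply: continuous_subspaceW hc => x [].
  have qc : {within K, continuous (fun x => M * sq p x)}.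
    apply: continuous_subspaceT => x.
    have := @cvgM _ _ _ (nbhs_filter x) (fun=> M) (sq p) M (sq p x).
    apply; [apply: cvg_cst | exact: sq_cont].
  move=> x; apply: cvgD; [exact: dc | exact: qc].
have [w Kw wmin] : exists2 c, c \in K & forall t, t \in K -> G c <= G t.
  by apply: EVT_min_rV => //; exists p.
move: Kw; rewrite inE => -[_ Qw].
have Gp : G p = d p by rewrite /G /sq subrr sdot0r mulr0 addr0.
have Gwp : G w <= d p by rewrite -Gp; apply: wmin; rewrite inE.
have gmin : forall x, Q x -> G w <= G x.
  move=> x Qx; have [bx|nbx] := pselect (box x).
    by apply: wmin; rewrite inE.
  have [i hi] : exists i, ~ `[p ord0 i - rho, p ord0 i + rho]%classic (x ord0 i).
    by apply/existsNP => hall; apply: nbx.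
  have hi' : rho < `|x ord0 i - p ord0 i|.
    rewrite ltNge; apply/negP => h; apply: hi; rewrite /= in_itv /=.
    move: h; rewrite ler_norml => /andP[h1 h2]; apply/andP; split; lra.
  have hsq : rho ^+ 2 <= sq p x.
    rewrite /sq; apply: le_trans (coord_sq_le (x - p) i).
    have h5 : rho ^+ 2 <= `|x ord0 i - p ord0 i| ^+ 2.
      by rewrite expr2 [X in _ <= X]expr2; apply: ler_pM; lra.
    rewrite mxE; apply: le_trans h5 _; rewrite -normrX ger0_norm ?sqr_ge0 //. by rewrite mxE.
  apply: (le_trans Gwp); rewrite /G.
  have : d p <= M * rho ^+ 2.
    rewrite /rho expr2; have : d p <= M * rho by rewrite /rho mulrDr mulrCA mulfV ?gt_eqF //; lra.
    move=> h; apply: le_trans h _; rewrite ler_pM2l // ler_peMr //; lra.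
  have := d_ge0 Qx.
  have : M * rho ^+ 2 <= M * sq p x by rewrite ler_pM2l.
  lra.
exists w; split => //.
  by apply: (penalty_Qo M0 Qw) => x Qx; exact: gmin.
by have := d_ge0 Qw; rewrite /G in Gwp; lra.
Qed.

End Key.

Lemma eta_conclude (R : realType) (C X : R) : 0 <= C ->
  (forall eta : R, 0 < eta -> eta <= 1 -> - (eta * C) <= X) -> 0 <= X.
Proof.
move=> C0 H; apply: (@approx_le _ _ _ C C0) => K.
have k0 : 0 < K.+1%:R :> R by rewrite ltr0n.
have i1 : K.+1%:R^-1 <= 1 :> R by rewrite invf_le1 // ler1n.
have ik : 0 < K.+1%:R^-1 :> R by rewrite invr_gt0.
have h := H (K.+1%:R^-1) ik i1.
have -> : C / K.+1%:R = K.+1%:R^-1 * C by rewrite mulrC.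
by rewrite addrC -lerBlDl sub0r.
Qed.

Section Key2.
Variables (R : realType) (n : nat).
Local Notation vec := 'rV[R]_n.
Variables (nrm : vec -> R) (Q : set vec) (d : vec -> R) (d' : vec -> vec).
Hypothesis nrmP : is_norm nrm.
Hypothesis clQ : closed Q.
Hypothesis cQ : convex_set Q.
Hypothesis dgf : is_dgf nrm Q d d'.

Lemma key1 (S z : vec) : Q z ->
  (forall p, Q p -> sdot S z + d z <= sdot S p + d p) ->
  forall y, Q y -> 0 <= sdot (S + d' z) (y - z).
Proof.
move=> Qz zmin y Qy.
case: (dgf) => _ _ _ dsub d'cont.
have zQo : Qo Q d z.
  split => //; exists (- (1^-1) *: S); apply: argmin_sub => //.
  by move=> p Qp; rewrite !mul1r; exact: zmin.
have stepA : forall w, Qo Q d w -> 0 <= sdot (S + d' w) (w - z).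
  move=> w wQo; have Qw : Q w by case: wQo.
  have h1 := dsub _ wQo _ Qz.
  have h2 := zmin _ Qw.
  rewrite !sdotBr in h1; rewrite sdotDl !sdotBr.
  lra.
set v := y - z; set K := S + d' z.
have C0 : 0 <= l1 v + l1 K + n%:R by rewrite !addr_ge0 ?l1_ge0 ?ler0n.
apply: (eta_conclude C0) => eta eta0 eta1.
have [del del0 hdel] := cont_eps d'cont zQo eta0.
have nv0 : 0 <= `|v| := normr_ge0 v.
pose t := del / (2 * (`|v| + 1) * (del + 1)).
have den0 : 0 < 2 * (`|v| + 1) * (del + 1).
  by apply: mulr_gt0; [apply: mulr_gt0 => //; lra | lra].
have t0 : 0 < t by rewrite /t divr_gt0.
have t1 : t <= 1.
  rewrite /t ler_pdivrMr // mul1r; nra.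
have ttv : t * (`|v| + 1) < del.
  have -> : t * (`|v| + 1) = del / (2 * (del + 1)).
    by rewrite /t; field; apply/andP; split; apply: lt0r_neq0; lra.
  rewrite ltr_pdivrMr; last lra.
  nra.
have t01 : 0 <= t <= 1 by rewrite ltW.
pose p := t *: y + (1 - t) *: z.
have Qp : Q p := convQ cQ Qy Qz t01.
have te0 : 0 < t * eta by rewrite mulr_gt0.
have dp0 : 0 <= d p := d_ge0 dgf Qp.
pose M := (d p + 1) / (t * eta) ^+ 2.
have M0 : 0 < M by rewrite /M divr_gt0 ?exprn_gt0 //; lra.
have [w [Qw wQo hw]] := exists_penalty clQ cQ dgf M0 Qp.
pose r := w - p.
have hr : `|r| < t * eta.
  have e1 : M * (t * eta) ^+ 2 = d p + 1.
    by rewrite /M; field; rewrite !gt_eqF.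
  have h1 : M * `|r| ^+ 2 < M * (t * eta) ^+ 2.
    have h2 : M * `|r| ^+ 2 <= M * sq p w by rewrite ler_pM2l //; exact: norm_sq_le.
    rewrite e1; lra.
  rewrite ltr_pM2l // in h1.
  rewrite ltNge; apply/negP => h.
  have : (t * eta) ^+ 2 <= `|r| ^+ 2.
    by rewrite expr2 [X in _ <= X]expr2; apply: ler_pM => //; apply: ltW.
  lra.
have ewz : w - z = t *: v + r.
  by rewrite /r /p /v; apply/rowP => i; rewrite !mxE; ring.
have wz : `|z - w| < del.
  rewrite -normrN opprB ewz.
  apply: le_lt_trans (ler_normD _ _) _.
  rewrite normrZ ger0_norm; last exact: ltW.
  have : t * `|v| + `|r| < t * `|v| + t * eta by rewrite ltrD2l.
  have : t * eta <= t := ler_piMr (ltW t0) eta1.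
  lra.
have he := hdel w wQo wz.
have hA := stepA w wQo.
set e := d' w - d' z.
have eK : S + d' w = K + e by rewrite /K /e; apply/rowP => i; rewrite !mxE; ring.
have ne : `|e| < eta by rewrite /e -normrN opprB.
clearbody e K r v.
rewrite ewz eK sdotDl !sdotDr !sdotZr in hA.
have ne0 : 0 <= `|e| := normr_ge0 e.
have nr0 : 0 <= `|r| := normr_ge0 r.
have b1 : sdot K r <= l1 K * (t * eta).
  apply: le_trans (ler_norm _) _; apply: le_trans (sdot_abs_le _ _) _.
  by apply: ler_wpM2l; [exact: l1_ge0 | exact: ltW].
have b2 : sdot e v <= eta * l1 v.
  apply: le_trans (ler_norm _) _; apply: le_trans (sdot_abs_le' _ _) _.
  by apply: ler_wpM2r; [exact: l1_ge0 | exact: ltW].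
have b3 : sdot e r <= eta * (n%:R * (t * eta)).
  apply: le_trans (ler_norm _) _; apply: le_trans (sdot_abs_le' _ _) _.
  apply: ler_pM => //; first exact: l1_ge0.
    exact: ltW.
  apply: le_trans (l1_le _) _; apply: ler_wpM2l; [exact: ler0n | exact: ltW].
have b3' : eta * (n%:R * (t * eta)) <= n%:R * t * eta.
  have : eta * eta <= eta := ler_piMr (ltW eta0) eta1.
  move=> h; have : n%:R * t * (eta * eta) <= n%:R * t * eta.
    apply: ler_wpM2l => //; apply: mulr_ge0; [exact: ler0n | exact: ltW].
  move=> h'; apply: le_trans h'; rewrite le_eqVlt; apply/orP; left; apply/eqP; ring.
have b2' : t * sdot e v <= t * (eta * l1 v) by apply: ler_wpM2l => //; exact: ltW.
have fin : 0 <= t * (sdot K v + eta * (l1 v + l1 K + n%:R)).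
  move: hA b1 b2' b3 b3'; generalize (n%:R : R) (sdot K v) (sdot K r) (sdot e v) (sdot e r) (l1 v) (l1 K).
  move=> N a1 a2 a3 a4 l1v l1K hA b1 b2' b3 b3'.
  clearbody t; lra.
rewrite pmulr_rge0 // in fin.
lra.
Qed.

End Key2.

Lemma key_gen (R : realType) (n : nat) (nrm : 'rV[R]_n -> R) (Q : set 'rV[R]_n)
  (d : 'rV[R]_n -> R) (d' : 'rV[R]_n -> 'rV[R]_n) :
  is_norm nrm -> closed Q -> convex_set Q -> is_dgf nrm Q d d' ->
  forall (S z : 'rV[R]_n) (c : R), 0 < c -> Q z ->
  (forall p, Q p -> sdot S z + c * d z <= sdot S p + c * d p) ->
  forall y, Q y -> 0 <= sdot S (y - z) + c * sdot (d' z) (y - z).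
Proof.
move=> nrmP clQ cQ dgf S z c c0 Qz zmin y Qy.
have h := @key1 R n nrm Q d d' clQ cQ dgf (c^-1 *: S) z Qz.
have : 0 <= sdot (c^-1 *: S + d' z) (y - z).
  apply: h => // p Qp; rewrite !sdotZl.
  have := zmin p Qp.
  have e : forall q, c^-1 * sdot S q + d q = c^-1 * (sdot S q + c * d q).
    by move=> q; field; rewrite gt_eqF.
  rewrite !e ler_pM2l // invr_gt0 //.
rewrite sdotDl sdotZl => h2.
have : 0 <= c * (c^-1 * sdot S (y - z) + sdot (d' z) (y - z)) by rewrite mulr_ge0 // ltW.
have -> : c * (c^-1 * sdot S (y - z) + sdot (d' z) (y - z)) = sdot S (y - z) + c * sdot (d' z) (y - z).
  by field; rewrite gt_eqF.
by [].
Qed.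


Lemma GamE (R : realType) t : Gam R t = t.+1%:R * t.+2%:R / 4.
Proof.
elim: t => [|t IH].
  by rewrite /Gam big_ord1 /gam /=; field.
rewrite /Gam big_ord_recr /= -/(Gam R t) IH /gam.
rewrite !(mulrSr _ t.+1) !(mulrSr _ t); field. all: by [].
Qed.

Lemma gam_ge0 (R : realType) k : 0 <= gam R k.
Proof. by rewrite /gam divr_ge0 ?ler0n. Qed.

Lemma A_aff (R : realType) n (f : 'rV[R]_n -> R) (g : nat -> 'rV[R]_n) (x : nat -> 'rV[R]_n) t p :
  \sum_(k < t.+1) gam R k * (f (x k) + sdot (g k) (p - x k)) =
  \sum_(k < t.+1) gam R k * (f (x k) - sdot (g k) (x k)) +
  sdot (\sum_(k < t.+1) gam R k *: g k) p.
Proof.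
rewrite sdot_sumr -big_split /=; apply: eq_bigr => k _.
by rewrite sdotZl sdotBr; ring.
Qed.

Lemma step_arith (R : realType) (G0 G1 ga ta L0 L1 fu fu' fx' sa sb sc N2 P0z P0z' P1z'
   dz dz' dxh kz kx sS E0 E1 : R) :
  fu' <= fx' + ta * sb + L1 / 2 * (ta ^+ 2 * N2) ->
  fx' - ta * sa <= fu ->
  ga / L0 * sb + (dxh - dz - kx) <= ga / L0 * sc + (dz' - dz - kz) ->
  2^-1 * N2 <= dxh - dz - kx ->
  0 <= sS + L0 * kz ->
  P0z' - P0z = sS + L0 * (dz' - dz) ->
  P1z' = P0z' - L0 * dz' + ga * (fx' + sc + (1 - ta) * sa) + L1 * dz' ->
  E1 = E0 + (L0 - L1) * (dz' - 2^-1 * N2) ->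
  G0 * fu <= P0z + E0 ->
  G1 = G0 + ga -> ta * G1 = ga -> G1 * ta ^+ 2 <= 1 -> 0 <= ta ->
  0 < L0 -> 0 < L1 -> 0 <= G0 -> 0 <= N2 -> 0 <= ga ->
  G1 * fu' <= P1z' + E1.
Proof.
move=> h1 h2 h3 h4 h5 h6 h7 h8 IH hG1 htG hGt ta0 L00 L10 G00 N20 ga0.
have G10 : 0 <= G1 by rewrite hG1; lra.
have m1 : G1 * fu' <= G1 * (fx' + ta * sb + L1 / 2 * (ta ^+ 2 * N2)) by rewrite ler_wpM2l.
have e1 : G1 * (fx' + ta * sb + L1 / 2 * (ta ^+ 2 * N2)) =
   G1 * fx' + (ta * G1) * sb + (G1 * ta ^+ 2) * (L1 / 2 * N2) by ring.
rewrite e1 htG in m1.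
have m1b : (G1 * ta ^+ 2) * (L1 / 2 * N2) <= L1 / 2 * N2.
  apply: ler_piMl => //; apply: mulr_ge0 => //; apply: divr_ge0 => //; exact: ltW.
have m2 : G0 * (fx' - ta * sa) <= G0 * fu by rewrite ler_wpM2l.
have eG0 : G0 * ta = ga * (1 - ta).
  have : G0 = G1 - ga by rewrite hG1; ring.
  move=> ->; rewrite mulrBl mulrC htG; ring.
have e2 : G0 * (fx' - ta * sa) = G0 * fx' - (G0 * ta) * sa by ring.
rewrite e2 eG0 in m2.
have m3 : L0 * (ga / L0 * sb + (dxh - dz - kx)) <= L0 * (ga / L0 * sc + (dz' - dz - kz)).
  by rewrite ler_pM2l.
have e3 : forall s w, L0 * (ga / L0 * s + w) = ga * s + L0 * w.
  by move=> s w; field; rewrite gt_eqF.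
rewrite !e3 in m3.
have m4 : L0 * (2^-1 * N2) <= L0 * (dxh - dz - kx) by rewrite ler_pM2l.
have e4 : G1 * fx' = G0 * fx' + ga * fx' by rewrite hG1; ring.
rewrite e4 in m1.
rewrite h7 h8.
have : P0z' = P0z + sS + L0 * (dz' - dz) by lra.
move=> ->.
nra.
Qed.

Theorem corollary1 (R : realType) (n : nat)
  (nrm : 'rV[R]_n -> R) (Q : set 'rV[R]_n)
  (f : 'rV[R]_n -> R) (gradf : 'rV[R]_n -> 'rV[R]_n) (L : R)
  (d : 'rV[R]_n -> R) (d' : 'rV[R]_n -> 'rV[R]_n)
  (xstar : 'rV[R]_n) (T : nat)
  (Ls : nat -> R) (x u z xh : nat -> 'rV[R]_n) :
  (* standing assumptions *)
  is_norm nrm -> closed Q -> convex_set Q ->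
  convex_fun f ->
  (forall p, differentiable f p /\ forall h, 'd f p h = sdot (gradf p) h) ->
  0 < L ->
  (forall p q, Q p -> Q q ->
     dual_norm nrm (gradf p - gradf q) <= L * nrm (p - q)) ->
  is_dgf nrm Q d d' ->
  (* x* minimizer of f over Q *)
  is_argmin Q f xstar ->
  (* the algorithm with gamma_t = (t+1)/2 *)
  Ls 0%N = L ->
  is_argmin Q d (x 0%N) -> d (x 0%N) = 0 ->
  is_argmin Q (fun p => gam R 0 * (f (x 0%N) + sdot (gradf (x 0%N)) (p - x 0%N))
                        + Ls 0%N * d p) (u 0%N) ->
  z 0%N = u 0%N ->
  (forall t, (t <= T)%N ->
     x t.+1 = tau R t *: z t + (1 - tau R t) *: u t) ->
  (forall t, (t <= T)%N ->
     is_prox Q d d' (z t) ((gam R t.+1 / Ls t) *: gradf (x t.+1)) (xh t.+1)) ->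
  (forall t, (t <= T)%N ->
     u t.+1 = tau R t *: xh t.+1 + (1 - tau R t) *: u t) ->
  (forall t, (1 <= t <= T)%N ->
     [/\ 0 < Ls t, Ls t <= L,
         f (u t) <= f (x t) + sdot (gradf (x t)) (u t - x t)
                    + Ls t / 2 * nrm (u t - x t) ^+ 2
       & is_argmin Q (fun p => \sum_(k < t.+1)
                  gam R k * (f (x k) + sdot (gradf (x k)) (p - x k))
                  + Ls t * d p) (z t)]) ->
  f (u T) - f xstar <=
    4 * Ls T * d xstar / (T.+1%:R * T.+2%:R)
    + \sum_(t < T) 4 * (Ls t - Ls t.+1) / (T.+1%:R * T.+2%:R)
                   * (d (z t.+1) - 2^-1 * nrm (z t - xh t.+1) ^+ 2).
Proof.
move=> nrmP clQ cQ cf df L0 lipg dgf [Qxs xsmin] Ls0 [Qx0 x0min] dx0 [Qu0 u0min] z0u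
  xdef xhprox udef hstep.
pose psi t p := \sum_(k < t.+1) gam R k * (f (x k) + sdot (gradf (x k)) (p - x k)) + Ls t * d p.
pose Sv t := \sum_(k < t.+1) gam R k *: gradf (x k).
pose Cs t := \sum_(k < t.+1) gam R k * (f (x k) - sdot (gradf (x k)) (x k)).
have psiE : forall t p, psi t p = Cs t + sdot (Sv t) p + Ls t * d p.
  by move=> t p; rewrite /psi (A_aff f (fun k => gradf (x k)) x).
pose E t := \sum_(k < t) (Ls k - Ls k.+1) * (d (z k.+1) - 2^-1 * nrm (z k - xh k.+1) ^+ 2).
have Lpos : forall t, (t <= T)%N -> 0 < Ls t.
  case=> [|t] tT; first by rewrite Ls0.
  by have [] := hstep t.+1 tT.
have zmin : forall t, (t <= T)%N -> is_argmin Q (psi t) (z t).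
  case=> [|t] tT.
    rewrite z0u /psi; split => // p Qp; rewrite !big_ord1; exact: u0min p Qp.
  by have [_ _ _] := hstep t.+1 tT.
have Qz : forall t, (t <= T)%N -> Q (z t) by move=> t /zmin [].
have zaff : forall t, (t <= T)%N -> forall p, Q p ->
    sdot (Sv t) (z t) + Ls t * d (z t) <= sdot (Sv t) p + Ls t * d p.
  move=> t tT p Qp; have [_ /(_ p Qp)] := zmin t tT.
  rewrite !psiE; lra.
have claim : forall t, (t <= T)%N -> Gam R t * f (u t) <= psi t (z t) + E t.
  elim=> [|t IH] tT.
    have G0 : Gam R 0 = 2^-1 by rewrite /Gam big_ord1 /gam /= div1r.
    have g0 : gam R 0 = 2^-1 by rewrite /gam /= div1r.
    have E0 : E 0%N = 0 by rewrite /E big_ord0.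
    rewrite G0 E0 /psi big_ord1 g0 z0u Ls0 addr0 /=.
    have desc := descent nrmP cQ cf df (ltW L0) lipg Qx0 Qu0.
    have sub0 : subdiff Q d (x 0%N) 0.
      by move=> y Qy; rewrite sdot0l addr0; exact: x0min y Qy.
    have scd : strongly_convex1_on nrm Q d by case: dgf.
    have scb := sc_sub cQ scd Qx0 Qu0 sub0.
    rewrite sdot0l subr0 dx0 subr0 in scb.
    have m : L * (2^-1 * nrm (u 0%N - x 0%N) ^+ 2) <= L * d (u 0%N) by rewrite ler_pM2l.
    have nn : 0 <= 2^-1 * nrm (u 0%N - x 0%N) ^+ 2 by rewrite mulr_ge0 // sqr_ge0.
    have dd : 0 <= d (u 0%N) by lra.
    have m2 : 0 <= L * d (u 0%N) by rewrite mulr_ge0 // ltW.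
    set b := sdot (gradf (x 0%N)) (u 0%N - x 0%N) in desc *.
    set a := L * d (u 0%N) in m m2 *.
    set c := nrm (u 0%N - x 0%N) in desc m.
    clearbody a b c.
    lra.
  have tT' : (t <= T)%N by exact: ltnW.
  have IH' := IH tT'.
  have [L1pos _ desc _] := hstep t.+1 tT.
  have L0pos := Lpos t tT'.
  set ta := tau R t.
  set ga := gam R t.+1.
  have ga0 : 0 <= ga := gam_ge0 R t.+1.
  have hG1 : Gam R t.+1 = Gam R t + ga by rewrite /Gam big_ord_recr.
  have G1pos : 0 < Gam R t.+1.
    rewrite GamE; apply: divr_gt0 => //; apply: mulr_gt0; exact: ltr0Sn.
  have htG : ta * Gam R t.+1 = ga by rewrite /ta /tau -/ga mulfVK // gt_eqF.
  have ta0 : 0 <= ta by rewrite /ta /tau divr_ge0 // ltW.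
  have hGt : Gam R t.+1 * ta ^+ 2 <= 1.
    have -> : Gam R t.+1 * ta ^+ 2 = ga ^+ 2 / Gam R t.+1.
      by rewrite /ta /tau -/ga; field; rewrite gt_eqF.
    rewrite ler_pdivrMr // mul1r /ga /gam GamE.
    rewrite !(mulrSr _ t.+2) !(mulrSr _ t.+1) !(mulrSr _ t).
    have : 0 <= t%:R :> R by exact: ler0n.
    move: (t%:R : R) => a a0.
    nra.
  have G00 : 0 <= Gam R t by rewrite GamE; apply: divr_ge0 => //; apply: mulr_ge0; exact: ler0n.
  have ex := xdef t tT'.
  have eu := udef t tT'.
  have e1 : u t.+1 - x t.+1 = ta *: (xh t.+1 - z t).
    by rewrite ex eu -/ta; apply/rowP => i; rewrite !mxE; ring.
  have e2 : u t - x t.+1 = (- ta) *: (z t - u t).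
    by rewrite ex -/ta; apply/rowP => i; rewrite !mxE; ring.
  have e3 : z t.+1 - x t.+1 = (z t.+1 - z t) + (1 - ta) *: (z t - u t).
    by rewrite ex -/ta; apply/rowP => i; rewrite !mxE; ring.
  rewrite e1 sdotZr (nrmZ nrmP) ger0_norm // exprMn in desc.
  have gi := grad_ineq cf df (x t.+1) (u t).
  rewrite e2 sdotZr mulNr in gi.
  have [Qxh hpm] := xhprox t tT'.
  have hp := hpm _ (Qz _ tT).
  rewrite /bregman !sdotZl in hp.
  have zQo : Qo Q d (z t).
    split; first exact: Qz.
    exists (- ((Ls t)^-1) *: Sv t); apply: argmin_sub => //; first exact: Qz.
    exact: zaff.
  have dsub : subdiff Q d (z t) (d' (z t)) by case: dgf => _ _ _ h _; exact: h.
  have scd : strongly_convex1_on nrm Q d by case: dgf.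
  have bl := sc_sub cQ scd (Qz _ tT') Qxh dsub.
  have kk := key_gen nrmP clQ cQ dgf L0pos (Qz _ tT') (zaff t tT') (Qz _ tT).
  have h6 : psi t (z t.+1) - psi t (z t) = sdot (Sv t) (z t.+1 - z t) + Ls t * (d (z t.+1) - d (z t)).
    rewrite !psiE sdotBr; ring.
  have h7 : psi t.+1 (z t.+1) = psi t (z t.+1) - Ls t * d (z t.+1) +
      ga * (f (x t.+1) + sdot (gradf (x t.+1)) (z t.+1 - z t) +
            (1 - ta) * sdot (gradf (x t.+1)) (z t - u t)) + Ls t.+1 * d (z t.+1).
    rewrite /psi big_ord_recr /= e3 sdotDr sdotZr -/ga; ring.
  have h8 : E t.+1 = E t + (Ls t - Ls t.+1) * (d (z t.+1) - 2^-1 * nrm (xh t.+1 - z t) ^+ 2).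
    by rewrite /E big_ord_recr /= (nrmB nrmP).
  have N20 : 0 <= nrm (xh t.+1 - z t) ^+ 2 by exact: sqr_ge0.
  move: desc gi hp bl kk h6 h7 h8 IH'.
  idtac.
  move=> h1 h2 h3 h4 h5 h6 h7 h8 h9; exact: (step_arith h1 h2 h3 h4 h5 h6 h7 h8 h9 hG1 htG hGt ta0 L0pos L1pos G00 N20 ga0).
have hc := claim T (leqnn T).
have [_ zTmin] := zmin T (leqnn T).
have h1 := zTmin xstar Qxs.
have h2 : \sum_(k < T.+1) gam R k * (f (x k) + sdot (gradf (x k)) (xstar - x k))
    <= Gam R T * f xstar.
  rewrite /Gam mulr_suml; apply: ler_sum => k _; apply: ler_wpM2l; first exact: gam_ge0.
  exact: grad_ineq.
have key : Gam R T * (f (u T) - f xstar) <= Ls T * d xstar + E T.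
  rewrite mulrBr; move: hc h1; rewrite /psi; lra.
set P := T.+1%:R * T.+2%:R.
have P0 : 0 < P by rewrite /P mulr_gt0 // ltr0Sn.
have eS : \sum_(t < T) 4 * (Ls t - Ls t.+1) / P * (d (z t.+1) - 2^-1 * nrm (z t - xh t.+1) ^+ 2)
    = 4 / P * E T.
  by rewrite /E mulr_sumr; apply: eq_bigr => k _; ring.
rewrite eS.
have -> : 4 * Ls T * d xstar / P + 4 / P * E T = 4 / P * (Ls T * d xstar + E T) by ring.
rewrite GamE -/P in key.
have P4 : 0 < P / 4 by rewrite divr_gt0.
rewrite -(ler_pM2l P4).
have -> : P / 4 * (4 / P * (Ls T * d xstar + E T)) = Ls T * d xstar + E T.
  by field; rewrite gt_eqF.
by [].
Qed.
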